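(* Let $G$ be a directed graph with $n$ nodes and $V_C\subseteq V(G)$ with $|V_C|=m$ such that the LTI network on $G$ with control nodes $V_C$ is strongly structurally controllable. Let $\mathcal{C}$ be a set of node-disjoint chains covering $V(G)$ with set of sources $V_C$ and $T$ a time function for $\mathcal{C}$ such that $G\in\mathcal{G}^{\mathcal{C},T}$. Then $E(\mathcal{G}^{\mathcal{C},T}_{\mathrm{perf}})\setminus E(G)$ is a critical additive edge-set of $G$, and $n^c_{\mathrm{add}}(G)=\frac12n(n+1)+\frac12m(2n-m-1)-|E(G)|$.
   Context: Graphs are directed, self-loops allowed; $V(G)=\{1,\ldots,n\}$; $G+E'$ has node set $V(G)$ and edge set $E(G)\cup E'$. $\mathcal{Q}(G)=\{A\in\mathbb{R}^{n\times n}:\text{for } i\neq j,\ A_{ij}\neq0\iff(j,i)\in E(G)\}$. For $V_C=\{j_1,\ldots,j_m\}$, $B=[e_{j_1},\ldots,e_{j_m}]$; the LTI network on $G$ with control nodes $V_C$ is strongly structurally controllable (SSC) if $(A,B)$ is controllable for all $A\in\mathcal{Q}(G)$. For an SSC network on $G$ with control nodes $V_C$, an additive edge-set is a set $E^*\subseteq (V(G)\times V(G))\setminus E(G)$ such that for every $E'\subseteq E^*$, the network on $G+E'$ with control nodes $V_C$ is SSC. The critical additive number $n^c_{\mathrm{add}}(G)$ is the maximum of $|E^*|$ over all additive edge-sets, and a critical additive edge-set is an additive edge-set of cardinality $n^c_{\mathrm{add}}(G)$. A chain is a directed path graph with source (start node) and sink (end node); for a non-sink $v$, $v+1$ is its out-neighbor.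 For node-disjoint chains $\mathcal{C}=\{C_1,\ldots,C_m\}$, $V=\bigcup_iV(C_i)$, $\gamma=|V|-m+1$, a time function is $T:V\to\{1,\ldots,\gamma\}$ with (1) $T(v)=1$ for every source; (2) distinct non-source nodes get distinct values; (3) $T(v)<T(v+1)$ for non-sink $v$. $T_{\max}(v)=\gamma$ for a sink $v$, else $T_{\max}(v)=T(v+1)-1$. $\mathcal{G}^{\mathcal{C},T}$ is the set of graphs $G$ with $V(G)=V$, $\bigcup_iE(C_i)\subseteq E(G)$, and $(u,v)\notin E(G)$ whenever $(u,v)\notin\bigcup_iE(C_i)$ and $T_{\max}(u)<T(v)$. $\mathcal{G}^{\mathcal{C},T}_{\mathrm{perf}}$ has node set $V$ and edge set $\bigcup_iE(C_i)\cup\{(u,v)\in V\times V: T_{\max}(u)\geq T(v)\}$. *)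

(* Defs.v *)
From mathcomp Require Import all_boot all_order all_algebra.
From mathcomp Require Import Rstruct.
From Stdlib Require Rdefinitions.
From mathcomp Require Import boolp.
Local Notation R := Rdefinitions.R.
Set Implicit Arguments. Unset Strict Implicit. Unset Printing Implicit Defensive.
Import Order.TTheory GRing.Theory Num.Theory.
Local Open Scope ring_scope.

(* A directed graph on node set {0,..,n-1} (= 'I_n) is given by its edge set
   E : {set 'I_n * 'I_n}; (u, v) \in E is the edge u -> v. Self-loops allowed. *)

Definition inQ (n : nat) (E : {set 'I_n * 'I_n}) (A : 'M[R]_n) : Prop :=
  forall i j : 'I_n, i != j -> (A i j != 0 <-> (j, i) \in E).

Definition inputB (n : nat) (VC : {set 'I_n}) : 'M[R]_(n, #|VC|) :=
  \matrix_(i < n, k < #|VC|) (i == enum_val k)%:R.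

Definition kalman (n m : nat) (A : 'M[R]_n) (B : 'M[R]_(n, m)) :=
  @mxrow R n (fun _ : 'I_n => m) n (fun k : 'I_n => A ^+ k *m B).

Definition controllable (n m : nat) (A : 'M[R]_n) (B : 'M[R]_(n, m)) : Prop :=
  \rank (kalman A B) = n.

Definition SSC (n : nat) (E : {set 'I_n * 'I_n}) (VC : {set 'I_n}) : Prop :=
  forall A : 'M[R]_n, inQ E A -> controllable A (inputB VC).

Definition additive (n : nat) (E : {set 'I_n * 'I_n}) (VC : {set 'I_n})
    (Es : {set 'I_n * 'I_n}) : bool :=
  [disjoint Es & E] &&
  [forall E' : {set 'I_n * 'I_n}, (E' \subset Es) ==> `[< SSC (E :|: E') VC >]].

Definition n_add (n : nat) (E : {set 'I_n * 'I_n}) (VC : {set 'I_n}) : nat :=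
  (\max_(Es : {set 'I_n * 'I_n} | additive E VC Es) #|Es|)%N.

Definition critical_additive (n : nat) (E : {set 'I_n * 'I_n}) (VC : {set 'I_n})
    (Es : {set 'I_n * 'I_n}) : Prop :=
  additive E VC Es /\ #|Es| = n_add E VC.

(* Chains: a collection of chains is a list of node lists, each list being the
   nodes of a chain in path order (source first, sink last). *)
Definition chain_edge (n : nat) (C : seq (seq 'I_n)) (u v : 'I_n) : bool :=
  has (fun c => (u, v) \in zip c (behead c)) C.

Definition chain_edges (n : nat) (C : seq (seq 'I_n)) : {set 'I_n * 'I_n} :=
  [set e | chain_edge C e.1 e.2].

Definition is_source (n : nat) (C : seq (seq 'I_n)) (x : 'I_n) : bool :=
  has (fun c => (c != [::]) && (head x c == x)) C.

Definition chain_cover (n : nat) (C : seq (seq 'I_n)) (VC : {set 'I_n}) : Prop :=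
  [/\ all (fun c => c != [::]) C,
      uniq (flatten C),
      (forall x : 'I_n, x \in flatten C) &
      (forall x : 'I_n, is_source C x = (x \in VC))].

Definition gamma (n : nat) (C : seq (seq 'I_n)) : nat := (n - size C + 1)%N.

Definition time_function (n : nat) (C : seq (seq 'I_n)) (T : 'I_n -> nat) : Prop :=
  [/\ (forall v, 1 <= T v <= gamma C)%N,
      (forall v, is_source C v -> T v = 1%N),
      (forall u v, ~~ is_source C u -> ~~ is_source C v -> u != v -> T u != T v) &
      (forall u v, chain_edge C u v -> T u < T v)%N].

Definition Tmax (n : nat) (C : seq (seq 'I_n)) (T : 'I_n -> nat) (v : 'I_n) : nat :=
  if [pick w | chain_edge C v w] is Some w then (T w - 1)%N else gamma C.

Definition in_GCT (n : nat) (C : seq (seq 'I_n)) (T : 'I_n -> nat)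
    (E : {set 'I_n * 'I_n}) : Prop :=
  chain_edges C \subset E /\
  (forall u v : 'I_n, ~~ chain_edge C u v -> (Tmax C T u < T v)%N -> (u, v) \notin E).

Definition perf_edges (n : nat) (C : seq (seq 'I_n)) (T : 'I_n -> nat) : {set 'I_n * 'I_n} :=
  chain_edges C :|: [set e | (T e.2 <= Tmax C T e.1)%N].

(* Main.v *)
Require Import Defs.
From mathcomp Require Import all_boot all_order all_algebra.
From mathcomp Require Import Rstruct.
From Stdlib Require Rdefinitions.
From mathcomp Require Import boolp zify ring lra.
Set Implicit Arguments. Unset Strict Implicit. Unset Printing Implicit Defensive.

Section LinAlg.
Import Order.TTheory GRing.Theory Num.Theory.
Local Open Scope ring_scope.
Local Notation R := Rdefinitions.R.

Lemma CH_span (n : nat) (A : 'M[R]_n) :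
  exists c : 'I_n -> R, A ^+ n = \sum_(i < n) c i *: A ^+ i.
Proof.
case: n A => [|n] A; first by exists (fun _ => 0); apply/matrixP => -[].
have := Cayley_Hamilton A.
rewrite -[char_poly A]coefK poly_def size_char_poly big_ord_recr /=.
have := char_poly_monic A; rewrite monicE /lead_coef size_char_poly /= => /eqP ->.
rewrite scale1r rmorphD /= !linear_sum /= => H.
exists (fun i => - (char_poly A)`_i).
move: H; rewrite rmorphXn /= horner_mx_X.
under eq_bigr do rewrite linearZ /= rmorphXn /= horner_mx_X.
move/eqP; rewrite addrC addr_eq0 => /eqP ->.
by rewrite -sumrN; apply: eq_bigr => i _; rewrite scaleNr.
Qed.

Lemma kalman0 (n m : nat) (A : 'M[R]_n) (B : 'M[R]_(n, m)) (y : 'rV[R]_n) :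
  y *m kalman A B = 0 <-> forall k : 'I_n, y *m (A ^+ k *m B) = 0.
Proof.
rewrite /kalman mul_mxrow; split => [H k | H].
  by have := mxrowK (fun k : 'I_n => y *m (A ^+ k *m B)) k; rewrite H submxrow0.
by rewrite (eq_mxrow (B_ := fun k : 'I_n => 0)) ?mxrow0.
Qed.

Lemma controllableP (n m : nat) (A : 'M[R]_n) (B : 'M[R]_(n, m)) :
  controllable A B <-> (forall y : 'rV[R]_n, y *m kalman A B = 0 -> y = 0).
Proof.
rewrite /controllable; split => [H y Hy | H].
  have F : row_free (kalman A B) by rewrite /row_free H.
  by apply/eqP; rewrite -(mulmx_free_eq0 _ F) Hy.
by apply/eqP; apply: inj_row_free.
Qed.

Lemma kalman_all (n m : nat) (A : 'M[R]_n) (B : 'M[R]_(n, m)) (y : 'rV[R]_n) :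
  y *m kalman A B = 0 -> forall k, y *m (A ^+ k *m B) = 0.
Proof.
move/kalman0 => H k; elim/ltn_ind: k => j IH.
case: (ltnP j n) => Hjn; first exact: (H (Ordinal Hjn)).
have [c Hc] := CH_span A.
have -> : A ^+ j = A ^+ (j - n) * A ^+ n by rewrite -exprD subnK.
rewrite Hc mulr_sumr mulmx_suml mulmx_sumr big1 // => i _.
rewrite -mulmxE -scalemxAr -scalemxAl -scalemxAr mulmxE -exprD.
rewrite (IH (j - n + i)%N) ?scaler0 //.
have := ltn_ord i; move: Hjn; clear; lia.
Qed.

Definition outW n (F : {set 'I_n * 'I_n}) (W : {set 'I_n}) (j : 'I_n) :=
  [set i in W | (j, i) \in F].

Definition ZF n (F : {set 'I_n * 'I_n}) (VC : {set 'I_n}) : Prop :=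
  forall W : {set 'I_n}, W != set0 -> [disjoint W & VC] ->
    exists2 j, j \notin W & #|outW F W j| = 1%N.

Lemma row_inputB n (VC : {set 'I_n}) (y : 'rV[R]_n) k :
  (y *m inputB VC) 0 k = y 0 (enum_val k).
Proof.
rewrite !mxE (bigD1 (enum_val k)) //= mxE eqxx mulr1 big1 ?addr0 // => i Hi.
by rewrite mxE (negbTE Hi) mulr0.
Qed.

Lemma Z_ssc n (F : {set 'I_n * 'I_n}) (VC : {set 'I_n}) : ZF F VC -> SSC F VC.
Proof.
move=> HZ A HA; apply/controllableP => y Hy.
pose K (y' : 'rV[R]_n) := y' *m kalman A (inputB VC) = 0.
pose Zs := [set i | `[< forall y' : 'rV[R]_n, K y' -> y' 0 i = 0 >]].
have KB y' : K y' -> y' *m inputB VC = 0.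
  by move=> /kalman_all /(_ 0%N); rewrite expr0 mul1mx.
have KA y' : K y' -> K (y' *m A).
  move=> Hy'; apply/kalman0 => k.
  by rewrite -mulmxA (mulmxA A) mulmxE -exprS kalman_all.
suff HZs : Zs = setT.
  apply/rowP => i; rewrite [RHS]mxE.
  have : i \in Zs by rewrite HZs inE.
  by rewrite inE => /asboolP; apply.
apply/eqP; rewrite eqEsubset subsetT /=; apply/subsetP => i1 _.
apply/negPn/negP => Hi1.
have HW : ~: Zs != set0 by apply/set0Pn; exists i1; rewrite inE.
have Hdisj : [disjoint ~: Zs & VC].
  rewrite disjoints_subset; apply/subsetP => v; rewrite in_setC => /negP Hv.
  rewrite in_setC; apply/negP => HvC; apply: Hv.
  rewrite inE; apply/asboolP => y' Ky'.
  have := KB _ Ky'; move/rowP/(_ (enum_rank_in HvC v)).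
  by rewrite row_inputB enum_rankK_in // mxE.
have [j Hj Hc] := HZ _ HW Hdisj.
have [i0 Hi0] := cards1P (introT eqP Hc).
have Hi0o : i0 \in outW F (~: Zs) j by rewrite Hi0 inE.
have Hi0W : i0 \in ~: Zs by move: Hi0o; rewrite /outW in_set => /andP [].
have Hji0 : (j, i0) \in F by move: Hi0o; rewrite /outW in_set => /andP [].
have Hjz : j \in Zs by move: Hj; rewrite inE negbK.
have Hne : i0 != j by apply/eqP => E; move: Hi0W; rewrite E inE Hjz.
move: Hi0W; rewrite inE => /negP; apply.
rewrite inE; apply/asboolP => y' Ky'.
have HyA := KA _ Ky'.
have : (y' *m A) 0 j = 0.
  by move: Hjz; rewrite inE => /asboolP; apply.
rewrite mxE (bigD1 i0) //= big1 ?addr0.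
  move/eqP; rewrite mulf_eq0 => /orP [/eqP // | H].
  by have := (HA i0 j Hne).2 Hji0; rewrite H.
move=> i Hi.
case: (boolP (i \in Zs)) => HiZ.
  by move: HiZ; rewrite inE => /asboolP ->; rewrite ?mul0r.
case: (eqVneq i j) => [E|Hij]; first by move: HiZ; rewrite E Hjz.
suff : A i j = 0 by move->; rewrite mulr0.
apply/eqP; apply/negPn/negP => /(HA i j Hij) Hedge.
have : i \in outW F (~: Zs) j by rewrite inE inE HiZ Hedge.
by rewrite Hi0 inE (negbTE Hi).
Qed.

Definition offv n (F : {set 'I_n * 'I_n}) (W : {set 'I_n}) (i j : 'I_n) : R :=
  if (j, i) \in F then
    (if (j \notin W) && ([pick x in outW F W j] == Some i)
     then 1 - (#|outW F W j|)%:R else 1)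
  else 0.

Definition Amat n (F : {set 'I_n * 'I_n}) (W : {set 'I_n}) : 'M[R]_n :=
  \matrix_(i, j) if i == j then
     (if j \in W then - \sum_(i' in W | i' != j) offv F W i' j else 0)
   else offv F W i j.

Lemma ssc_Z n (F : {set 'I_n * 'I_n}) (VC : {set 'I_n}) : SSC F VC -> ZF F VC.
Proof.
move=> HS W HW Hdisj.
case: (boolP [exists j, (j \notin W) && (#|outW F W j| == 1%N)]).
  by move=> /existsP [j /andP [H1 /eqP H2]]; exists j.
move=> /existsPn Hne; exfalso.
have Hne' j : j \notin W -> #|outW F W j| != 1%N.
  by move=> Hj; have := Hne j; rewrite Hj.
pose A := Amat F W.
have HA : inQ F A.
  move=> i j Hij; rewrite /A /Amat mxE (negbTE Hij) /offv.
  case: ifP => Hedge; last by split => // /eqP.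
  split => // _.
  case: ifP => [/andP [Hj /eqP Hp] | _]; last exact: oner_neq0.
  have Hi : i \in outW F W j by move: Hp; case: pickP => // x Hx [<-].
  have H1 : (0 < #|outW F W j|)%N by apply/card_gt0P; exists i.
  have H2 := Hne' _ Hj.
  rewrite subr_eq0; apply/negP => /eqP.
  rewrite -[1]/(1%:R) => /eqP; rewrite eqr_nat => /eqP E.
  by move: H2; rewrite -E.
pose y : 'rV[R]_n := \row_i (i \in W)%:R.
have yA : y *m A = 0.
  apply/rowP => j; rewrite !mxE (bigID (mem W)) /= [X in _ + X]big1 ?addr0;
    last by move=> i /negbTE Hi; rewrite mxE Hi mul0r.
  under eq_bigr => i Hi do rewrite mxE Hi mul1r.
  case: (boolP (j \in W)) => Hj.
    rewrite (bigD1 j) //= /A /Amat mxE eqxx Hj.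
    under eq_bigr => i /andP [_ Hij] do rewrite mxE (negbTE Hij).
    by rewrite addNr.
  have -> : \sum_(i in W) A i j = \sum_(i in W) offv F W i j.
    apply: eq_bigr => i Hi; rewrite /A /Amat mxE ifF //.
    by apply/eqP => E; move: Hj; rewrite -E Hi.
  case Hp: [pick x in outW F W j] => [i0|]; last first.
    rewrite big1 // => i Hi; rewrite /offv.
    case: ifP => // Hedge.
    move: Hp; case: pickP => // Hnone _.
    by have := Hnone i; rewrite inE Hi Hedge.
  have Hi0 : i0 \in outW F W j by move: Hp; case: pickP => // x Hx [<-].
  have Hi0W : i0 \in W by move: Hi0; rewrite inE => /andP [].
  rewrite (bigD1 i0) //= {1}/offv.
  have -> : (j, i0) \in F by move: Hi0; rewrite inE => /andP [].
  rewrite Hj /=.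
  rewrite Hp eqxx /=.
  have -> : \sum_(i in W | i != i0) offv F W i j = \sum_(i in outW F W j :\ i0) 1.
    rewrite big_mkcond [RHS]big_mkcond; apply: eq_bigr => i _.
    rewrite /offv !inE; case: (i \in W); case: (eqVneq i i0) => [->|Hii0] //=.
    case: ((j, i) \in F) => //=; rewrite Hj Hp /=.
    by case: eqP => // -[E]; move: Hii0; rewrite E eqxx.
  rewrite sumr_const (cardsD1 i0 (outW F W j)) Hi0 natrD.
  by rewrite (_ : true%:R = 1 :> R) //; ring.
have yB : y *m inputB VC = 0.
  apply/rowP => k; rewrite row_inputB !mxE.
  have Hk := enum_valP k.
  case: (boolP (enum_val k \in W)) => // HkW.
  by move: Hdisj; rewrite disjoints_subset => /subsetP /(_ _ HkW); rewrite inE Hk.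
have yK : y *m kalman A (inputB VC) = 0.
  apply/kalman0 => -[[|k] Hk] /=; first by rewrite expr0 mul1mx.
  by rewrite exprS -mulmxE !mulmxA yA !mul0mx.
have := (controllableP _ _).1 (HS A HA) y yK.
case/set0Pn: HW => w Hw /rowP /(_ w); rewrite !mxE Hw.
by move/eqP; rewrite oner_eq0.
Qed.

End LinAlg.

Definition Sset n (F : {set 'I_n * 'I_n}) (D : {set 'I_n}) : {set 'I_n * 'I_n} :=
  [set p | (p \notin F) && (p.2 \notin D) && [exists i, (i \notin D) && ((p.1, i) \in F)]].

Lemma Z_count_aux n (F : {set 'I_n * 'I_n}) (VC : {set 'I_n}) : ZF F VC ->
  forall k (D : {set 'I_n}), VC \subset D -> #|~: D| = k -> 'C(k, 2) <= #|Sset F D|.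
Proof.
move=> HZ; elim=> [|k IH] D HD Hk; first by rewrite bin0n.
have HW : ~: D != set0 by apply/set0Pn/card_gt0P; rewrite Hk.
have Hdisj : [disjoint ~: D & VC].
  by rewrite disjoints_subset setCS.
have [j Hj Hc] := HZ _ HW Hdisj.
have [v Hv] := cards1P (introT eqP Hc).
have Hvo : v \in outW F (~: D) j by rewrite Hv inE.
have HvW : v \in ~: D by move: Hvo; rewrite /outW in_set => /andP [].
have Hjv : (j, v) \in F by move: Hvo; rewrite /outW in_set => /andP [].
have HjD : j \in D by move: Hj; rewrite in_setC negbK.
have HvD : v \notin D by rewrite -in_setC.
pose D' := v |: D.
have HD' : VC \subset D' by apply: subset_trans HD (subsetUr _ _).
have Hk' : #|~: D'| = k.
  have := cardsC D; have := cardsC D'; rewrite /D' cardsU1 HvD.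
  move: Hk; clear; lia.
have := IH _ HD' Hk'.
pose N := [set (j, w) | w in ~: D :\ v].
have HN : #|N| = k.
  rewrite card_imset; last by move=> a b [].
  by have := cardsD1 v (~: D); rewrite HvW Hk => -[].
have Hsub : Sset F D' :|: N \subset Sset F D.
  apply/subsetP => p; rewrite in_setU => /orP [].
    rewrite /Sset !inE => /andP [/andP [-> H2] /existsP [i /andP [Hi Hi2]]].
    move: H2 Hi; rewrite /D' !inE !negb_or => /andP [_ ->] /andP [_ Hi] /=.
    by apply/existsP; exists i; rewrite Hi Hi2.
  case/imsetP => w; rewrite !inE => /andP [Hwv HwD] ->.
  rewrite /= HwD /= andbT; apply/andP; split.
    apply/negP => Hjw.
    have : w \in outW F (~: D) j by rewrite inE in_setC HwD Hjw.
    by rewrite Hv inE (negbTE Hwv).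
  by apply/existsP; exists v; rewrite HvD Hjv.
have Hdis : [disjoint Sset F D' & N].
  rewrite -setI_eq0; apply/eqP/setP => p; rewrite !inE.
  apply/negP => /andP [/andP [_ /existsP [i /andP [Hi Hi2]]] /imsetP [w _ Ep]].
  move: Hi Hi2; rewrite Ep /D' !inE negb_or => /andP [Hiv HiD] /= Hji.
  have : i \in outW F (~: D) j by rewrite inE in_setC HiD Hji.
  by rewrite Hv inE (negbTE Hiv).
have := subset_leq_card Hsub.
rewrite cardsU (_ : Sset F D' :&: N = set0); last by apply/eqP; rewrite setI_eq0.
rewrite cards0 subn0 HN binS bin1.
lia.
Qed.

Lemma Z_count n (F : {set 'I_n * 'I_n}) (VC : {set 'I_n}) : ZF F VC ->
  #|F| + 'C(n - #|VC|, 2) <= n * n.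
Proof.
move=> HZ.
have H := Z_count_aux HZ (subxx VC) (erefl _).
have Hs : Sset F VC \subset ~: F.
  by apply/subsetP => p; rewrite !inE => /andP [/andP [-> _] _].
have := subset_leq_card Hs.
have := cardsC F; rewrite card_prod card_ord.
have E : #|~: VC| = (n - #|VC|)%N.
  by have := cardsC VC; rewrite card_ord; clear; lia.
move: H; rewrite E; clear; lia.
Qed.

Lemma mem_zip2 (S : eqType) (s t : seq S) a b :
  (a, b) \in zip s t -> a \in s /\ b \in t.
Proof.
elim: s t => [|x s IH] [|y t] //=; rewrite in_cons => /orP [/eqP [-> ->] | H].
  by rewrite !in_cons !eqxx.
by have [H1 H2] := IH _ H; rewrite !in_cons H1 H2 !orbT.
Qed.

Lemma zip_pred_uniq (S : eqType) (c : seq S) u u' w : uniq c ->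
  (u, w) \in zip c (behead c) -> (u', w) \in zip c (behead c) -> u = u'.
Proof.
elim: c => [|x s IH] //=; case: s IH => [|y s] IH //=.
move=> /andP [Hx Hu].
rewrite !in_cons => /orP [/eqP E1 | H1] /orP [/eqP E2 | H2].
- by case: E1 => -> _; case: E2 => ->.
- case: E1 => _ E; have [_ H] := mem_zip2 H2.
  by move: Hu => /= /andP [/negP []]; rewrite -E.
- case: E2 => _ E; have [_ H] := mem_zip2 H1.
  by move: Hu => /= /andP [/negP []]; rewrite -E.
- exact: IH.
Qed.

Lemma zip_succ_uniq (S : eqType) (c : seq S) u w w' : uniq c ->
  (u, w) \in zip c (behead c) -> (u, w') \in zip c (behead c) -> w = w'.
Proof.
elim: c => [|x s IH] //=; case: s IH => [|y s] IH //=.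
move=> /andP [Hx Hu].
rewrite !in_cons => /orP [/eqP E1 | H1] /orP [/eqP E2 | H2].
- by case: E1 => _ ->; case: E2 => _ ->.
- case: E1 => E _; have [H _] := mem_zip2 H2.
  by move: Hx; rewrite -E H.
- case: E2 => E _; have [H _] := mem_zip2 H1.
  by move: Hx; rewrite -E H.
- exact: IH.
Qed.

Lemma zip_pred_ex (S : eqType) (s : seq S) h x : x \in s ->
  exists u, (u, x) \in zip (h :: s) s.
Proof.
elim: s h => [|y s IH] h //=; rewrite in_cons => /orP [/eqP -> | H].
  by exists h; rewrite in_cons eqxx.
by have [u Hu] := IH y H; exists u; rewrite in_cons Hu orbT.
Qed.

Lemma ce_mem n (C : seq (seq 'I_n)) u w : chain_edge C u w ->
  (u \in flatten C) && (w \in flatten C).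
Proof.
elim: C => [|c C IH] //=; rewrite /chain_edge /= mem_cat mem_cat => /orP [H | H].
  by have [H1 H2] := mem_zip2 H; rewrite H1 (mem_behead H2).
by move/andP: (IH H) => [-> ->]; rewrite !orbT.
Qed.

Lemma ce_pred_uniq n (C : seq (seq 'I_n)) u u' w : uniq (flatten C) ->
  chain_edge C u w -> chain_edge C u' w -> u = u'.
Proof.
elim: C => [|c C IH] //=; rewrite cat_uniq => /and3P [Hc Hd HC].
rewrite /chain_edge /= => /orP [H1 | H1] /orP [H2 | H2].
- exact: zip_pred_uniq H1 H2.
- have [_ /mem_behead Hw] := mem_zip2 H1.
  by move/andP: (ce_mem H2) => [_ Hw']; move/hasP: Hd; case; exists w.
- have [_ /mem_behead Hw] := mem_zip2 H2.
  by move/andP: (ce_mem H1) => [_ Hw']; move/hasP: Hd; case; exists w.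
- exact: IH.
Qed.

Lemma ce_succ_uniq n (C : seq (seq 'I_n)) u w w' : uniq (flatten C) ->
  chain_edge C u w -> chain_edge C u w' -> w = w'.
Proof.
elim: C => [|c C IH] //=; rewrite cat_uniq => /and3P [Hc Hd HC].
rewrite /chain_edge /= => /orP [H1 | H1] /orP [H2 | H2].
- exact: zip_succ_uniq H1 H2.
- have [Hw _] := mem_zip2 H1.
  by move/andP: (ce_mem H2) => [Hw' _]; move/hasP: Hd; case; exists u.
- have [Hw _] := mem_zip2 H2.
  by move/andP: (ce_mem H1) => [Hw' _]; move/hasP: Hd; case; exists u.
- exact: IH.
Qed.

Lemma ce_pred_ex n (C : seq (seq 'I_n)) x : x \in flatten C ->
  ~~ is_source C x -> exists u, chain_edge C u x.
Proof.
elim: C => [|c C IH] //=; rewrite mem_cat /is_source /= negb_or.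
move=> /orP [Hx | Hx] /andP [Hs1 Hs2].
  case: c Hx Hs1 => [|h s] //; rewrite in_cons /= => /orP [/eqP E | Hx] Hs1.
    by move: Hs1; rewrite E eqxx.
  by have [u Hu] := zip_pred_ex h Hx; exists u; rewrite /chain_edge /= Hu.
have [u Hu] := IH Hx Hs2; exists u.
by rewrite /chain_edge /= orbC; move: Hu; rewrite /chain_edge => ->.
Qed.

Lemma src_VC n (C : seq (seq 'I_n)) VC x : chain_cover C VC ->
  is_source C x = (x \in VC).
Proof. by case. Qed.

Lemma Tmax_succ n (C : seq (seq 'I_n)) VC T u w : chain_cover C VC ->
  chain_edge C u w -> Tmax C T u = (T w - 1)%N.
Proof.
case=> _ Hu _ _ Huw; rewrite /Tmax; case: pickP => [w' Hw'|Hn].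
  by rewrite (ce_succ_uniq Hu Huw Hw').
by have := Hn w; rewrite Huw.
Qed.

Lemma chain_Z n (C : seq (seq 'I_n)) VC T (F : {set 'I_n * 'I_n}) :
  chain_cover C VC -> time_function C T ->
  chain_edges C \subset F -> F \subset perf_edges C T -> ZF F VC.
Proof.
move=> HC HT HCF HFP W HW Hdisj.
have [HC1 HCu HCa HCs] := HC.
have [HT1 HT2 HT3 HT4] := HT.
case/set0Pn: HW => v0 Hv0.
case: (arg_minnP T Hv0) => v HvW Hmin.
have HvVC : v \notin VC.
  by apply/negP => H; move: Hdisj; rewrite disjoints_subset => /subsetP /(_ _ HvW); rewrite inE H.
have [u Huv] : exists u, chain_edge C u v.
  by apply: ce_pred_ex; rewrite ?HCa // HCs.
have HuW : u \notin W.
  by apply/negP => /Hmin; have := HT4 _ _ Huv; lia.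
exists u => //; apply/eqP/cards1P; exists v; apply/setP => i; rewrite !inE.
apply/andP/eqP => [[HiW Hui] | ->].
  move/subsetP: HFP => /(_ _ Hui); rewrite !inE /= => /orP [Hce | HTi].
    exact: (ce_succ_uniq HCu Hce Huv).
  have := Hmin _ HiW; move: HTi; rewrite (Tmax_succ _ HC Huv).
  have := HT1 v; lia.
split => //; move/subsetP: HCF; apply; by rewrite inE.
Qed.

Lemma bin2_double k : ('C(k, 2) * 2 = k * k.-1)%N.
Proof.
elim: k => [|k IH] //; rewrite binS bin1 mulnDl IH.
case: k {IH} => [|k] //=; lia.
Qed.

Lemma perf_count n (C : seq (seq 'I_n)) VC T :
  chain_cover C VC -> time_function C T ->
  (#|~: perf_edges C T| <= 'C(#|~: VC|, 2))%N.
Proof.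
move=> HC HT.
have [HC1 HCu HCa HCs] := HC.
have [HT1 HT2 HT3 HT4] := HT.
pose succ u := odflt u [pick w | chain_edge C u w].
pose f (p : 'I_n * 'I_n) := (succ p.1, p.2).
have Hp p : p \in ~: perf_edges C T ->
  [/\ chain_edge C p.1 (succ p.1), ~~ chain_edge C p.1 p.2 &
      (T (succ p.1) - 1 < T p.2)%N].
  rewrite !inE negb_or => /andP [Hnce HnT].
  have Hnce' : ~~ chain_edge C p.1 p.2 by exact: Hnce.
  move: HnT; rewrite -ltnNge /Tmax /succ; case: pickP => [w Hw | Hn] /= Hlt.
    by split.
  by have := HT1 p.2; case/andP => _ H; rewrite ltnNge H in Hlt.
pose P := [set q : 'I_n * 'I_n | (q.1 \notin VC) && (q.2 \notin VC) && (T q.1 < T q.2)%N].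
have HfP : [set f p | p in ~: perf_edges C T] \subset P.
  apply/subsetP => q /imsetP [p Hpin ->]; have [Hce Hnce Hlt] := Hp p Hpin.
  have Hw1 := HT4 _ _ Hce; have /andP [Hu1 _] := HT1 p.1; have /andP [Hv1 _] := HT1 p.2.
  have Hws : succ p.1 \notin VC.
    by rewrite -(src_VC _ HC); apply/negP => /HT2 E; move: Hw1; rewrite E; lia.
  have Hvs : p.2 \notin VC.
    by rewrite -(src_VC _ HC); apply/negP => /HT2 E; lia.
  rewrite !inE /= Hvs andbT.
  rewrite Hws /=.
  case: (ltngtP (T (succ p.1)) (T p.2)) => // [Hgt | Heq]; first lia.
  have := HT3 (succ p.1) p.2; rewrite !(src_VC _ HC) Hws Hvs Heq eqxx /=.
  move=> H; apply: H => //; apply/eqP => E.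
  by move: Hnce; rewrite -E Hce.
have Hinj : {in ~: perf_edges C T &, injective f}.
  move=> p p' Hpin Hpin' [E1 E2].
  have [Hce _ _] := Hp p Hpin; have [Hce' _ _] := Hp p' Hpin'.
  move: Hce'; rewrite -E1 => Hce'.
  have E3 := ce_pred_uniq HCu Hce Hce'.
  by case: p p' {Hpin Hpin' Hce Hce'} E1 E2 E3 => a b [a' b'] /= _ -> ->.
have H1 := subset_leq_card HfP; rewrite card_in_imset // in H1.
pose sw (q : 'I_n * 'I_n) := (q.2, q.1).
have swK : involutive sw by case.
pose D := [set (x, x) | x in ~: VC].
pose Q := setX (~: VC) (~: VC) :\: D.
have HPQ : P :|: [set sw q | q in P] \subset Q.
  apply/subsetP => q; rewrite in_setU => /orP [Hq | /imsetP [q' Hq' ->]].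
    move: Hq; rewrite !inE => /andP [/andP [H1' H2'] H3'].
    rewrite H1' H2' !andbT; apply/imsetP => -[x _ E].
    by move: H3'; rewrite E /= ltnn.
  move: Hq'; rewrite !inE => /andP [/andP [H1' H2'] H3'].
  rewrite /sw /= H1' H2' !andbT; apply/imsetP => -[x _ E].
  by move: H3'; case: q' E H1' H2' => a b [-> ->] /=; rewrite ltnn.
have HPd : P :&: [set sw q | q in P] = set0.
  apply/setP => q; rewrite !inE; apply/negP => /andP [Hq /imsetP [q' Hq' E]].
  move: Hq Hq'; rewrite E !inE /= => /andP [_ Ha] /andP [_ Hb]; lia.
have := subset_leq_card HPQ.
rewrite cardsU HPd cards0 subn0 card_imset; last exact: inv_inj.
rewrite cardsD cardsX (setIidPr _); last first.
  by apply/subsetP => q /imsetP [x Hx ->]; rewrite !inE -!in_setC Hx.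
rewrite card_imset; last by move=> a b [].
have := bin2_double #|~: VC|.
move: H1; move: #|P| #|~: VC| #|~: perf_edges C T| => a k b.
move: ('C(k, 2)) => c; nia.
Qed.

Lemma arith (n m e : nat) : (m <= n)%N ->
  (n * n - 'C(n - m, 2) - e = (n * n.+1) %/ 2 + (m * (2 * n - m - 1)) %/ 2 - e)%N.
Proof.
move=> Hmn.
have [k ->] : exists k, n = (m + k)%N by exists (n - m); lia.
have -> : (m + k - m = k)%N by lia.
have Ha := bin2_double (m + k).+1.
have Hb := bin2_double m.
have Hc := bin2_double k.
rewrite /= in Ha.
have -> : ((m + k) * (m + k).+1 = 'C((m + k).+1, 2) * 2)%N by rewrite Ha mulnC.
have -> : (m * (2 * (m + k) - m - 1) = ('C(m, 2) + m * k) * 2)%N.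
  clear Hc; case: m Hb {Hmn Ha} => [|m] Hb; first by rewrite !mul0n.
  rewrite mulnDl Hb /=.
  have -> : (2 * (m.+1 + k) - m.+1 - 1 = m + 2 * k)%N by lia.
  ring.
rewrite !mulnK //.
have Hkey : ('C((m + k).+1, 2) + ('C(m, 2) + m * k) + 'C(k, 2) = (m + k) * (m + k))%N.
  apply/eqP; rewrite -(eqn_pmul2r (_ : 0 < 2)%N) //.
  move: Ha Hb Hc; move: ('C((m + k).+1, 2)) ('C(m, 2)) ('C(k, 2)) => a b c Ha Hb Hc.
  rewrite !mulnDl Ha Hb Hc.
  apply/eqP; clear; case: m => [|m]; case: k => [|k] /=; ring.
move: Hkey; move: ((m + k) * (m + k))%N (m * k)%N => X Y.
move: ('C((m + k).+1, 2)) ('C(m, 2)) ('C(k, 2)) => a b c.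
lia.
Qed.

Unset Implicit Arguments.

Theorem theorem6 (n : nat) (E : {set 'I_n * 'I_n}) (VC : {set 'I_n})
    (C : seq (seq 'I_n)) (T : 'I_n -> nat) :
  SSC E VC ->
  chain_cover C VC ->
  time_function C T ->
  in_GCT C T E ->
  critical_additive E VC (perf_edges C T :\: E) /\
  n_add E VC = ((n * n.+1) %/ 2 + (#|VC| * (2 * n - #|VC| - 1)) %/ 2 - #|E|)%N.
Proof.
move=> HS HC HT [HCE HGE].
have HEP : E \subset perf_edges C T.
  apply/subsetP => -[u v] Huv; rewrite !inE /=.
  case: (boolP (chain_edge C u v)) => //= Hnce.
  by rewrite leqNgt; apply/negP => /(HGE _ _ Hnce); rewrite Huv.
have Hadd : additive E VC (perf_edges C T :\: E).
  apply/andP; split.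
    by rewrite disjoints_subset; apply/subsetP => p; rewrite !inE => /andP [].
  apply/forallP => E'; apply/implyP => HE'; apply/asboolP.
  apply: Z_ssc; apply: (chain_Z HC HT).
    exact: subset_trans HCE (subsetUl _ _).
  rewrite subUset HEP /=; apply: subset_trans HE' _; exact: subsetDl.
have HkVC : #|~: VC| = (n - #|VC|)%N.
  by have := cardsC VC; rewrite card_ord; lia.
have HmN : (#|VC| <= n)%N by have := cardsC VC; rewrite card_ord; lia.
have Hperf : #|perf_edges C T| = (n * n - 'C(n - #|VC|, 2))%N.
  have H1 := perf_count HC HT; rewrite HkVC in H1.
  have H2 : (#|perf_edges C T| + 'C(n - #|VC|, 2) <= n * n)%N :=
    Z_count (chain_Z HC HT (subsetUl _ _) (subxx (perf_edges C T))).
  have := cardsC (perf_edges C T); rewrite card_prod card_ord.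
  move: H1 H2; move: ('C(n - #|VC|, 2)) => c; lia.
have HPE : #|perf_edges C T :\: E| = (#|perf_edges C T| - #|E|)%N.
  by rewrite cardsD (setIidPr HEP).
have Hbound Es : additive E VC Es -> (#|Es| <= #|perf_edges C T :\: E|)%N.
  move=> /andP [Hd /forallP /(_ Es)]; rewrite subxx /= => /asboolP HS'.
  have := Z_count (ssc_Z HS').
  rewrite cardsU (_ : E :&: Es = set0); last first.
    by apply/eqP; rewrite setI_eq0 disjoint_sym.
  rewrite HPE Hperf cards0 subn0.
  move: ('C(n - #|VC|, 2)) => c. move: (n * n)%N => N. move: #|E| #|Es| => a b. lia.
have Hnadd : n_add E VC = #|perf_edges C T :\: E|.
  apply/eqP; rewrite eqn_leq; apply/andP; split.
    by apply/bigmax_leqP => Es; apply: Hbound.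
  by rewrite /n_add; apply: (leq_bigmax_cond _ Hadd).
split; first by split.
by rewrite Hnadd HPE Hperf arith.
Qed.
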